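(* Let $A$ be the graph on $9$ vertices consisting of a central triangle with vertices $p_0,p_1,p_2$ together with three further triangles $\Delta_0,\Delta_1,\Delta_2$, where $\Delta_i$ shares exactly the vertex $p_i$ with the central triangle and the triangles $\Delta_0,\Delta_1,\Delta_2$ are pairwise vertex-disjoint. Let $G=A\,\square\,A$ be the cartesian product of $A$ with itself (the ''2-hive''). Then there exists a set $S\subseteq V(G)$ that is a non-isolated perfect dominating set of $G$, i.e. every vertex of $G$ not in $S$ either has exactly one neighbour in $S$, or has exactly two neighbours in $S$ and these two neighbours are the end-vertices of an edge of $G$. Moreover, the connected components of the subgraph of $G$ induced by $S$ are: four copies of $K_2$ (single edges), one $4$-cycle $K_2\square K_2$, and one triangular prism $K_3\square K_2$.
   Context: A tersquare is the graph $K_3\square K_3$ (cartesian product of two triangles, vertex set $F_3\times F_3$ with $F_3=\{0,1,2\}$); its triangles are the six subgraphs obtained by fixing one coordinate. The paper's ''2-hive'' $[[\emptyset]]$ is the union of $16$ tersquares: a central tersquare, six ''subcentral'' tersquares each glued to the central one along exactly one of its six triangles, and nine ''corner'' tersquares, each sharing one triangle with a subcentral tersquare glued along an $x$-triangle, one triangle with a subcentral tersquare glued along a $y$-triangle, and exactly one vertex with the central tersquare. As a graph this union is exactly $A\square A$ as described in the claim (the $16$ tersquares being the products $T\times T'$ with $T,T'$ among the four triangles of $A$). Here $K_2$ is a single edge, and $\square$ denotes the cartesian product of graphs. *)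

(* Defs.v *)
From mathcomp Require Import all_boot.
Set Implicit Arguments. Unset Strict Implicit. Unset Printing Implicit Defensive.

(* Simple graphs: symmetric irreflexive boolean relations on a finType. *)

Definition Kn (n : nat) : rel 'I_n := fun x y => x != y.
Arguments Kn n : clear implicits.

Definition cartprod (T U : finType) (e : rel T) (f : rel U) : rel (T * U) :=
  fun x y => ((x.1 == y.1) && f x.2 y.2) || ((x.2 == y.2) && e x.1 y.1).

(* The graph A on vertices 0..8: central triangle {0,1,2} (p_i = i),
   and triangles Delta_0 = {0,3,4}, Delta_1 = {1,5,6}, Delta_2 = {2,7,8}. *)
Definition inT (t : seq nat) (a b : nat) : bool := (a \in t) && (b \in t).

Definition adjA : rel 'I_9 := fun x y =>
  (x != y) &&
  [|| inT [:: 0; 1; 2] x y, inT [:: 0; 3; 4] x y,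
      inT [:: 1; 5; 6] x y | inT [:: 2; 7; 8] x y].

Definition hiveV := ('I_9 * 'I_9)%type.
Definition adjG : rel hiveV := cartprod adjA adjA.

Definition nbhd (T : finType) (e : rel T) (v : T) : {set T} := [set u | e v u].

Definition nipds (T : finType) (e : rel T) (S : {set T}) : Prop :=
  forall v, v \notin S ->
    let NS := nbhd e v :&: S in
    (#|NS| == 1) ||
    ((#|NS| == 2) && [forall x in NS, forall y in NS, (x != y) ==> e x y]).

Definition induced (T : finType) (e : rel T) (S : {set T}) : rel T :=
  fun x y => [&& x \in S, y \in S & e x y].

Definition components (T : finType) (e : rel T) (S : {set T}) : {set {set T}} :=
  [set [set y in S | connect (induced e S) x y] | x in S].

Definition iso_induced (H : finType) (eH : rel H) (T : finType) (e : rel T)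
  (C : {set T}) : bool :=
  [exists f : {ffun H -> T},
    [&& injectiveb f, [set f u | u : H] == C &
        [forall u, forall v, eH u v == e (f u) (f v)]]].

(* Main.v *)
Require Import Defs.
From mathcomp Require Import all_boot.

Set Implicit Arguments. Unset Strict Implicit. Unset Printing Implicit Defensive.

(* computable ordinals *)
Definition mkord n m : option 'I_n :=
  match (m < n) as b return (m < n) = b -> option 'I_n with
  | true => fun H => Some (Ordinal H)
  | false => fun _ => None
  end (erefl (m < n)).

Lemma mkord_aux n m b (e : (m < n) = b) :
  omap val ((match b as b0 return (m < n) = b0 -> option 'I_n with
  | true => fun H => Some (Ordinal H)
  | false => fun _ => None
  end) e) = if b then Some m else None.
Proof. by case: b e. Qed.

Lemma mkordK n (i : 'I_n) : mkord n i = Some i.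
Proof.
have : omap val (mkord n i) = if i < n then Some (val i) else None.
  exact: mkord_aux.
rewrite ltn_ord.
case: (mkord n i) => [j|] //= [Ej]; congr Some; exact: val_inj.
Qed.

Definition ordl n : seq 'I_n := pmap (mkord n) (iota 0 n).

Lemma mem_ordl n (i : 'I_n) : i \in ordl n.
Proof.
rewrite /ordl mem_pmap; apply/mapP; exists (val i); last by rewrite mkordK.
by rewrite mem_iota add0n ltn_ord.
Qed.

Definition pairl (A B : finType) (s : seq A) (t : seq B) : seq (A * B) :=
  [seq (a, b) | a <- s, b <- t].

Lemma mem_pairl (A B : finType) (s : seq A) (t : seq B) :
  (forall a, a \in s) -> (forall b, b \in t) -> forall x, x \in pairl s t.
Proof. move=> Hs Ht [a b]; exact: (allpairs_f pair (Hs a) (Ht b)). Qed.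

Definition allV : seq hiveV := pairl (ordl 9) (ordl 9).

Lemma memV x : x \in allV.
Proof. exact: mem_pairl (@mem_ordl 9) (@mem_ordl 9) x. Qed.

Lemma allV_all (P : pred hiveV) : all P allV -> forall x, P x.
Proof. by move=> /allP H x; apply: H; exact: memV. Qed.

Lemma uniqV : uniq allV.
Proof. by vm_compute. Qed.

Lemma cardV (A : {pred hiveV}) (p : pred hiveV) : A =i p -> #|A| = count p allV.
Proof.
move=> E; rewrite cardE -size_filter; apply: perm_size; apply: uniq_perm.
- exact: enum_uniq.
- exact: filter_uniq uniqV.
- by move=> x; rewrite mem_enum mem_filter memV andbT E.
Qed.

Definition ord9 m : 'I_9 := odflt ord0 (mkord 9 m).
Definition vx a b : hiveV := (ord9 a, ord9 b).

Definition blkid (x : hiveV) : nat :=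
  let a := val x.1 in let b := val x.2 in
  if (a == 1) && (b \in [:: 7; 8]) then 1 else
  if (a == 2) && (b \in [:: 3; 4]) then 2 else
  if (a == 2) && (b \in [:: 5; 6]) then 3 else
  if (b == 2) && (a \in [:: 7; 8]) then 4 else
  if (a \in [:: 5; 6]) && (b \in [:: 0; 1]) then 5 else
  if (a \in [:: 3; 4]) && (b \in [:: 0; 1; 2]) then 6 else 0.

Definition Sb (x : hiveV) : bool := blkid x != 0.
Definition S0 : {set hiveV} := [set x | Sb x].
Definition blk (j : nat) : {set hiveV} := [set y | blkid y == j].

Definition rep (j : nat) : hiveV :=
  match j with
  | 1 => vx 1 7 | 2 => vx 2 3 | 3 => vx 2 5 | 4 => vx 7 2
  | 5 => vx 5 0 | _ => vx 3 0 end.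

Definition pth (j : nat) : seq hiveV :=
  match j with
  | 1 => [:: vx 1 8] | 2 => [:: vx 2 4] | 3 => [:: vx 2 6] | 4 => [:: vx 8 2]
  | 5 => [:: vx 5 1; vx 6 1; vx 6 0]
  | _ => [:: vx 3 1; vx 3 2; vx 4 2; vx 4 1; vx 4 0] end.

Definition Rb : rel hiveV := fun x y => [&& Sb x, Sb y & adjG x y].

Lemma Rb_closed_c : all (fun u => all (fun w => Rb u w ==> (blkid u == blkid w)) allV) allV.
Proof. by vm_compute. Qed.

Lemma Rb_sym_c : all (fun u => all (fun w => Rb u w == Rb w u) allV) allV.
Proof. by vm_compute. Qed.

Lemma paths_c : all (fun j => path Rb (rep j) (pth j)) (iota 1 6).
Proof. by vm_compute. Qed.

Lemma cover_c : all (fun u => Sb u ==> (u \in rep (blkid u) :: pth (blkid u))) allV.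
Proof. by vm_compute. Qed.

Lemma blkid_le_c : all (fun u => blkid u <= 6) allV.
Proof. by vm_compute. Qed.

Lemma Rb_sym : symmetric Rb.
Proof. move=> u w; apply/eqP; exact: (allP (allV_all Rb_sym_c u) w (memV w)). Qed.

Lemma conn_rep u : Sb u -> connect Rb (rep (blkid u)) u.
Proof.
move=> Su.
have Hc := implyP (allV_all cover_c u) Su.
have Hb : blkid u \in iota 1 6.
  by rewrite mem_iota; move: Su (allV_all blkid_le_c u); rewrite /Sb; case: (blkid u).
exact: path_connect (allP paths_c _ Hb) _ Hc.
Qed.

Lemma comp_blk x : Sb x ->
  [set y in S0 | connect (induced adjG S0) x y] = blk (blkid x).
Proof.
move=> Sx.
have E : connect (induced adjG S0) =2 connect Rb.
  by apply: eq_connect => u w; rewrite /induced /Rb !inE.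
apply/setP => y; rewrite !inE E.
apply/andP/idP => [[Sy cxy]|/eqP Exy].
- pose a := [pred z | blkid z == blkid x].
  have cl : closed Rb a.
    move=> u w Ruw; rewrite !inE.
    by rewrite (eqP (implyP (allP (allV_all Rb_closed_c u) w (memV w)) Ruw)).
  by have := closed_connect cl cxy; rewrite !inE eqxx => /esym.
- have Sy : Sb y by rewrite /Sb Exy.
  split=> //; apply: connect_trans (conn_rep Sy).
  rewrite Exy; rewrite (sym_connect_sym Rb_sym); exact: conn_rep.
Qed.

Lemma blkid_repn j : j < 6 -> blkid (rep j.+1) = j.+1.
Proof. by case: j => [|[|[|[|[|[|]]]]]] //; vm_compute. Qed.

Lemma blkid_rep (i : 'I_6) : blkid (rep i.+1) = i.+1.
Proof. exact: blkid_repn (ltn_ord i). Qed.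

Lemma comps_eq : components adjG S0 = [set blk (val i).+1 | i : 'I_6].
Proof.
apply/setP => C; apply/imsetP/imsetP => [[x Sx ->]|[i _ ->]].
- rewrite inE in Sx; rewrite comp_blk //.
  have Hl : (blkid x).-1 < 6.
    by move: Sx (allV_all blkid_le_c x); rewrite /Sb; case: (blkid x).
  exists (Ordinal Hl) => //=; rewrite prednK //; by rewrite lt0n.
- exists (rep i.+1); first by rewrite inE /Sb blkid_rep.
  by rewrite comp_blk ?blkid_rep // /Sb blkid_rep.
Qed.

Lemma iso_of (H : finType) (eH : rel H) (C : {set hiveV}) (cb : pred hiveV)
  (g : H -> hiveV) (lh : seq H) :
  C =i cb -> (forall u, u \in lh) ->
  all (fun u => all (fun w => (g u == g w) ==> (u == w)) lh) lh ->
  all (fun u => cb (g u)) lh ->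
  all (fun y => cb y ==> (y \in map g lh)) allV ->
  all (fun u => all (fun w => eH u w == adjG (g u) (g w)) lh) lh ->
  iso_induced eH adjG C.
Proof.
move=> EC lhT Hinj Hin Hsur Hedge.
apply/existsP; exists [ffun u => g u]; apply/and3P; split.
- apply/injectiveP => u w; rewrite !ffunE => E.
  have := allP (allP Hinj u (lhT u)) w (lhT w); rewrite E eqxx => /eqP //.
- apply/eqP/setP => y; rewrite EC.
  apply/imsetP/idP => [[u _ ->]|cy].
  + by rewrite ffunE; exact: (allP Hin u (lhT u)).
  + have := implyP (allP Hsur y (memV y)) cy => /mapP [u _ ->].
    by exists u => //; rewrite ffunE.
- apply/forallP => u; apply/forallP => w; rewrite !ffunE.
  exact: (allP (allP Hedge u (lhT u)) w (lhT w)).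
Qed.

Lemma iso_cardC (H : finType) (eH : rel H) (C : {set hiveV}) :
  iso_induced eH adjG C -> #|C| = #|H|.
Proof.
case/existsP => f /and3P [/injectiveP inj /eqP <- _].
by rewrite card_imset.
Qed.

Lemma blkE j : blk j =i (fun y => blkid y == j).
Proof. by move=> y; rewrite inE. Qed.

Lemma mem_pair2 (n m : nat) (x : 'I_n * 'I_m) : x \in pairl (ordl n) (ordl m).
Proof. exact: mem_pairl (@mem_ordl n) (@mem_ordl m) x. Qed.

Ltac iso_tac := apply: iso_of; [exact: blkE | first [exact: mem_ordl | exact: mem_pair2] | by vm_compute ..].

Definition gK2 j (u : 'I_2) : hiveV := if val u == 0 then rep j else head (rep 0) (pth j).

Ltac isoK2_tac j :=
  apply: (@iso_of _ _ _ _ (gK2 j) (ordl 2)); [exact: blkE | exact: mem_ordl | ..];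
  vm_compute; reflexivity.

Lemma isoK2_1 : iso_induced (Kn 2) adjG (blk 1). Proof. isoK2_tac 1. Qed.
Lemma isoK2_2 : iso_induced (Kn 2) adjG (blk 2). Proof. isoK2_tac 2. Qed.
Lemma isoK2_3 : iso_induced (Kn 2) adjG (blk 3). Proof. isoK2_tac 3. Qed.
Lemma isoK2_4 : iso_induced (Kn 2) adjG (blk 4). Proof. isoK2_tac 4. Qed.

Lemma isoC4 : iso_induced (cartprod (Kn 2) (Kn 2)) adjG (blk 5).
Proof.
apply: (@iso_of _ _ _ _ (fun u : 'I_2 * 'I_2 => vx (5 + val u.1) (val u.2)) (pairl (ordl 2) (ordl 2))).
- exact: blkE.
- exact: mem_pair2.
all: by vm_compute.
Qed.

Lemma isoP : iso_induced (cartprod (Kn 3) (Kn 2)) adjG (blk 6).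
Proof.
apply: (@iso_of _ _ _ _ (fun u : 'I_3 * 'I_2 => vx (3 + val u.2) (val u.1)) (pairl (ordl 3) (ordl 2))).
- exact: blkE.
- exact: mem_pair2.
all: by vm_compute.
Qed.

Lemma card_blk j : #|blk j| = count (fun y => blkid y == j) allV.
Proof. exact: cardV (blkE j). Qed.

Definition nsl v := [seq u <- allV | adjG v u && Sb u].

Lemma nipds_c : all (fun v => Sb v ||
   (size (nsl v) == 1) || ((size (nsl v) == 2) &&
      all (fun x => all (fun y => (x != y) ==> adjG x y) (nsl v)) (nsl v))) allV.
Proof. by vm_compute. Qed.

Lemma nipdsS : nipds adjG S0.
Proof.
move=> v; rewrite inE => nSv.
have NSE : nbhd adjG v :&: S0 =i (fun u => adjG v u && Sb u).
  by move=> u; rewrite !inE.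
have memN u : (u \in nsl v) = (adjG v u && Sb u) by rewrite mem_filter memV andbT.
have := allV_all nipds_c v; rewrite (negbTE nSv) /=.
rewrite (cardV NSE) -size_filter -/(nsl v).
case/orP => [->//|/andP [c2 H]]; apply/orP; right; rewrite c2 /=.
apply/forallP => x; apply/implyP; rewrite NSE => Hx0.
have Hx : x \in nsl v by rewrite memN; exact: Hx0.
apply/forallP => y; apply/implyP; rewrite NSE => Hy0.
have Hy : y \in nsl v by rewrite memN; exact: Hy0.
exact: (allP (allP H x Hx) y Hy).
Qed.

Lemma card_blkn j : j < 6 -> #|blk j.+1| = nth 0 [:: 2; 2; 2; 2; 4; 6] j.
Proof. by rewrite card_blk; case: j => [|[|[|[|[|[|]]]]]] //; vm_compute. Qed.

Lemma isoK2_blk j : j < 6 -> iso_induced (Kn 2) adjG (blk j.+1) = (j < 4).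
Proof.
case: j => [|[|[|[|[|[|]]]]]] // _;
  try (by apply/idP; first [exact: isoK2_1 | exact: isoK2_2 | exact: isoK2_3 | exact: isoK2_4]);
  by apply/negbTE/negP => Hiso; have := iso_cardC Hiso; rewrite card_blkn // card_ord.
Qed.

Lemma isoC4_blk j : j < 6 -> iso_induced (cartprod (Kn 2) (Kn 2)) adjG (blk j.+1) = (j == 4).
Proof.
case: j => [|[|[|[|[|[|]]]]]] // _;
  try (by apply/idP; exact: isoC4);
  by apply/negbTE/negP => Hiso; have := iso_cardC Hiso; rewrite card_blkn // card_prod !card_ord.
Qed.

Lemma isoP_blk j : j < 6 -> iso_induced (cartprod (Kn 3) (Kn 2)) adjG (blk j.+1) = (j == 5).
Proof.
case: j => [|[|[|[|[|[|]]]]]] // _;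
  try (by apply/idP; exact: isoP);
  by apply/negbTE/negP => Hiso; have := iso_cardC Hiso; rewrite card_blkn // card_prod !card_ord.
Qed.

Theorem theorem4p1 :
  exists S : {set hiveV},
    nipds adjG S /\
    (forall C, C \in components adjG S ->
       [|| iso_induced (Kn 2) adjG C,
           iso_induced (cartprod (Kn 2) (Kn 2)) adjG C
         | iso_induced (cartprod (Kn 3) (Kn 2)) adjG C]) /\
    #|[set C in components adjG S | iso_induced (Kn 2) adjG C]| = 4 /\
    #|[set C in components adjG S |
         iso_induced (cartprod (Kn 2) (Kn 2)) adjG C]| = 1 /\
    #|[set C in components adjG S |
         iso_induced (cartprod (Kn 3) (Kn 2)) adjG C]| = 1.
Proof.
exists S0; split; first exact: nipdsS.
split.
  move=> C; rewrite comps_eq => /imsetP [i _ ->].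
  have Hi := ltn_ord i.
  rewrite isoK2_blk // isoC4_blk // isoP_blk //.
  by case: i Hi => n Hn _ /=; move: Hn; case: n => [|[|[|[|[|[|n]]]]]].
split.
  have -> : [set C in components adjG S0 | iso_induced (Kn 2) adjG C]
          = [set blk (val i).+1 | i : 'I_4].
    apply/setP => C; rewrite inE comps_eq.
    apply/andP/imsetP => [[/imsetP [i _ ->]]|[i _ ->]].
      rewrite isoK2_blk ?ltn_ord // => Hi.
      by exists (Ordinal Hi).
    have Hi6 : val i < 6 by apply: leq_trans (ltn_ord i) _.
    split; last by rewrite isoK2_blk ?ltn_ord.
    by apply/imsetP; exists (Ordinal Hi6).
  rewrite card_imset ?card_ord //.
  move=> a b /= E; apply: val_inj.
  have Ha : val a < 6 by apply: leq_trans (ltn_ord a) _.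
  have : rep (val a).+1 \in blk (val a).+1 by rewrite inE blkid_repn.
  by rewrite E inE blkid_repn // => /eqP [].
have sing : forall (k : nat) (P : pred {set hiveV}), k < 6 ->
    (forall j, j < 6 -> P (blk j.+1) = (j == k)) ->
    #|[set C in components adjG S0 | P C]| = 1.
  move=> k P Hk HP.
  have -> : [set C in components adjG S0 | P C] = [set blk k.+1].
    apply/setP => C; rewrite inE comps_eq in_set1.
    apply/andP/eqP => [[/imsetP [i _ ->]]|->].
      by rewrite HP ?ltn_ord // => /eqP ->.
    split; last by rewrite HP // eqxx.
    by apply/imsetP; exists (Ordinal Hk).
  exact: cards1.
split.
  apply: (sing 4) => // j Hj; exact: isoC4_blk.
apply: (sing 5) => // j Hj; exact: isoP_blk.
Qed.
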